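(* Let $N\in\mathbb{N}$ with $N\ge3$, $s\in\mathbb{N}$, and $n\in\mathbb{N}$ with $n\ge4s^2$. Then there is a real $E$ with $|E|\le 1.5\,s^{\frac{N+3}{2}}\cosh\left(2\pi\sqrt{\frac s3}\right)n^{-\frac{N+2}{2}}$ such that \[ e^{2\pi\sqrt{\frac{n+s}{3}}}=e^{2\pi\sqrt{\frac n3}}\left(\sum_{m=0}^{N+1}\frac{d^{[1]}_s(m)}{n^{\frac m2}}+E\right). \]
   Context: For $m\in\mathbb{N}_0$: $e^{[1]}_s(0):=1$, $e^{[1]}_s(m):=\frac{s^m(2m-1)!}{(-4)^m}\sum_{\nu=1}^{m}\frac{(-4\pi^2s/3)^\nu}{(2\nu-1)!(\nu+m)!(m-\nu)!}$ for $m\ge1$; $o^{[1]}_s(m):=\frac{\pi s^{m+1}(2m)!}{\sqrt3(-4)^m}\sum_{\nu=0}^{m}\frac{(-4\pi^2s/3)^\nu}{(2\nu)!(m-\nu)!(\nu+m+1)!}$; $d^{[1]}_s(2m):=e^{[1]}_s(m)$, $d^{[1]}_s(2m+1):=o^{[1]}_s(m)$. *)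

(* Defs.v *)
From Stdlib Require Import Reals Factorial.
Open Scope R_scope.

Definition e_one (s : R) (m : nat) : R :=
  match m with
  | O => 1
  | S _ =>
    (s ^ m * INR (fact (2 * m - 1)%nat) / (-4) ^ m) *
    sum_f_R0 (fun k => let nu := S k in
       (-4 * PI ^ 2 * s / 3) ^ nu /
       (INR (fact (2 * nu - 1)%nat) * INR (fact (nu + m)%nat) * INR (fact (m - nu)%nat)))
      (m - 1)%nat
  end.

Definition o_one (s : R) (m : nat) : R :=
  (PI * s ^ (m + 1)%nat * INR (fact (2 * m)%nat) / (sqrt 3 * (-4) ^ m)) *
  sum_f_R0 (fun nu =>
     (-4 * PI ^ 2 * s / 3) ^ nu /
     (INR (fact (2 * nu)%nat) * INR (fact (m - nu)%nat) * INR (fact (nu + m + 1)%nat)))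
    m.

Definition d_one (s : R) (m : nat) : R :=
  if Nat.even m then e_one s (Nat.div2 m) else o_one s (Nat.div2 m).

(* Main.v *)
Require Import Defs.
From Stdlib Require Import Reals Lra Lia Factorial.
From Coquelicot Require Import Coquelicot.
Open Scope R_scope.

Fixpoint Y (m : nat) : nat -> R :=
  match m with
  | O => fun k => match k with O => 1 | S _ => 0 end
  | S m' => fun k => match k with O => 0 | S k' => (Y m' k' - Y m' (S (S k'))) / 2 end
  end.

Lemma Y_lt : forall m k, (m < k)%nat -> Y m k = 0.
Proof.
  induction m; intros k H.
  - destruct k; [lia|reflexivity].
  - destruct k; [lia|]. simpl. rewrite !IHm by lia. lra.
Qed.

Lemma Y_parity : forall m k, Nat.even (m + k) = false -> Y m k = 0.
Proof.
  induction m; intros k H.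
  - destruct k; [discriminate|reflexivity].
  - destruct k; [reflexivity|]. simpl.
    rewrite !IHm. lra.
    + replace (m + S (S k))%nat with (S (S (m + k)))%nat by lia.
      replace (S m + S k)%nat with (S (S (m + k)))%nat in H by lia. exact H.
    + replace (S m + S k)%nat with (S (S (m + k)))%nat in H by lia. exact H.
Qed.

Lemma Y_step_bound : forall m b, (forall k, Rabs (Y m k) <= b) -> forall k, Rabs (Y (S m) k) <= b.
Proof.
  intros m b H k. destruct k; simpl.
  - rewrite Rabs_R0. specialize (H 0%nat). pose proof (Rabs_pos (Y m 0)). lra.
  - pose proof (H k). pose proof (H (S (S k))).
    unfold Rdiv. rewrite Rabs_mult. rewrite (Rabs_right (/2)) by lra.
    pose proof (Rabs_triang (Y m k) (- Y m (S (S k)))). rewrite Rabs_Ropp in H2.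
    unfold Rminus. lra.
Qed.

Lemma Y_bound1 : forall m k, Rabs (Y m k) <= 1.
Proof.
  induction m; intros k.
  - destruct k; simpl; rewrite ?Rabs_R1, ?Rabs_R0; lra.
  - apply Y_step_bound. exact IHm.
Qed.

Lemma Y1_bound : forall k, Rabs (Y 1 k) <= /2.
Proof.
  intros [|[|k]]; simpl.
  - rewrite Rabs_R0; lra.
  - replace ((1 - 0) / 2) with (/2) by field. rewrite Rabs_right; lra.
  - replace ((0 - 0) / 2) with 0 by field. rewrite Rabs_R0; lra.
Qed.

Lemma Y1_SS : forall k, Y 1 (S (S k)) = 0.
Proof. intros k; simpl; field. Qed.

Lemma Y_bound2 : forall m k, (2 <= m)%nat -> Rabs (Y m k) <= /4.
Proof.
  intros m k Hm. induction Hm as [|m Hm IH] in k |- *.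
  - destruct k as [|k].
    + simpl. rewrite Rabs_R0; lra.
    + change (Y 2 (S k)) with ((Y 1 k - Y 1 (S (S k))) / 2). rewrite Y1_SS.
      pose proof (Y1_bound k). unfold Rdiv. rewrite Rminus_0_r, Rabs_mult.
      rewrite (Rabs_right (/2)) by lra. lra.
  - apply Y_step_bound. exact IH.
Qed.

Definition G (k i : nat) : R := (-1)^i * INR (S k) * INR (fact (k + 2*i)) /
   (INR (fact (S k + i)) * INR (fact i) * 2 ^ (S k + 2*i)).

Lemma G0 : forall k, G k 0 = / 2 ^ (S k).
Proof.
  intros k. unfold G. replace (k + 2*0)%nat with k by lia.
  replace (S k + 0)%nat with (S k) by lia. replace (S k + 2*0)%nat with (S k) by lia.
  rewrite fact_simpl, mult_INR. simpl (fact 0). simpl ((-1)^0).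
  pose proof (INR_fact_neq_0 k). pose proof (pow_lt 2 (S k) ltac:(lra)).
  rewrite Rmult_1_l. simpl (INR 1). rewrite S_INR in *. pose proof (pos_INR k).
  field. repeat split; try lra; exact H.
Qed.

Lemma GidS : forall k i, G (S k) (S i) = (G k (S i) - G (S (S k)) i) / 2.
Proof.
  intros k i. unfold G.
  replace (S k + 2 * S i)%nat with (S (k + 2*i + 2)) by lia.
  replace (k + 2 * S i)%nat with (k + 2*i + 2)%nat by lia.
  replace (S (S k) + 2 * i)%nat with (k + 2*i + 2)%nat by lia.
  replace (S (S k) + S i)%nat with (S (k + i + 2)) by lia.
  replace (S k + S i)%nat with (k + i + 2)%nat by lia.
  replace (S (S (S k)) + i)%nat with (S (k + i + 2)) by lia.
  replace (S (S k) + 2 * S i)%nat with (S (k + 2*i + 3)) by lia.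
  replace (S k + 2 * S i)%nat with (k + 2*i + 3)%nat by lia.
  replace (S (S (S k)) + 2 * i)%nat with (k + 2*i + 3)%nat by lia.
  rewrite !fact_simpl, !mult_INR.
  rewrite <- !tech_pow_Rmult.
  pose proof (INR_fact_neq_0 (k + 2*i + 2)).
  pose proof (INR_fact_neq_0 (k + i + 2)).
  pose proof (INR_fact_neq_0 i).
  pose proof (pow_lt 2 (k + 2*i+3) ltac:(lra)).
  replace (k + 2 * i + 3)%nat with (S (k + 2 * i + 2)) by lia.
  rewrite <- !tech_pow_Rmult.
  rewrite !S_INR, !plus_INR, !mult_INR. simpl (INR 2). simpl (INR 3).
  pose proof (pos_INR k). pose proof (pos_INR i).
  pose proof (pow_lt 2 (k + 2*i+2) ltac:(lra)).
  generalize dependent (INR (fact (k + 2 * i + 2))).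
  generalize dependent (INR (fact (k + i + 2))).
  generalize dependent (INR (fact i)).
  generalize dependent (2 ^ (k + 2 * i + 2)).
  generalize ((-1)^i). generalize dependent (INR i). generalize dependent (INR k).
  intros. field. repeat split; try lra.
Qed.

Lemma Gid0 : forall i, G 0 (S i) = (0 - G 1 i) / 2.
Proof.
  intros i. unfold G.
  replace (0 + 2 * S i)%nat with (2*i + 2)%nat by lia.
  replace (1 + 2 * i)%nat with (2*i + 1)%nat by lia.
  replace (1 + S i)%nat with (S (S i)) by lia.
  replace (2 + i)%nat with (S (S i)) by lia.
  replace (1 + 2 * S i)%nat with (S (2*i + 2)) by lia.
  replace (2 + 2 * i)%nat with (2*i + 2)%nat by lia.
  replace (2 * i + 2)%nat with (S (2*i + 1))%nat by lia.
  rewrite !fact_simpl, !mult_INR.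
  rewrite <- !tech_pow_Rmult.
  pose proof (INR_fact_neq_0 (2*i+1)).
  pose proof (INR_fact_neq_0 (S i)).
  pose proof (INR_fact_neq_0 i).
  pose proof (pow_lt 2 (2*i+1) ltac:(lra)).
  rewrite !S_INR, !plus_INR, !mult_INR. simpl (INR 2). simpl (INR 1). simpl (INR 0).
  pose proof (pos_INR i).
  field. repeat split; try lra.
Qed.

Lemma Y_diag : forall k, Y k k = / 2 ^ k.
Proof.
  induction k.
  - simpl. field.
  - change (Y (S k) (S k)) with ((Y k k - Y k (S (S k))) / 2).
    rewrite IHk, (Y_lt k (S (S k))) by lia. simpl. field.
    apply pow_nonzero. lra.
Qed.

Lemma Y_closed : forall i k, Y (S k + 2 * i) (S k) = G k i.
Proof.
  induction i as [|i IHi]; intros k.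
  - rewrite G0. replace (S k + 2 * 0)%nat with (S k) by lia. apply Y_diag.
  - induction k as [|k IHk].
    + replace (S 0 + 2 * S i)%nat with (S (S (S (2 * i)))) by lia.
      change (Y (S (S (S (2 * i)))) 1) with ((Y (S (S (2 * i))) 0 - Y (S (S (2*i))) 2) / 2).
      rewrite Gid0. f_equal. f_equal.
      replace (S (S (2 * i))) with (S 1 + 2 * i)%nat by lia. apply IHi.
    + replace (S (S k) + 2 * S i)%nat with (S (S k + 2 * S i)) by lia.
      change (Y (S (S k + 2 * S i)) (S (S k))) with
        ((Y (S k + 2 * S i) (S k) - Y (S k + 2 * S i) (S (S (S k)))) / 2).
      rewrite GidS, IHk.
      replace (S k + 2 * S i)%nat with (S (S (S k)) + 2 * i)%nat by lia.
      rewrite IHi. reflexivity.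
Qed.

Lemma sum_zero_tail : forall F L K, (forall k, (L < k)%nat -> F k = 0) -> (L <= K)%nat ->
  sum_f_R0 F K = sum_f_R0 F L.
Proof.
  intros F L K HF HK. induction HK as [|K HK IH].
  - reflexivity.
  - simpl. rewrite IH, HF by lia. ring.
Qed.

Lemma sum_even_odd : forall F M, sum_f_R0 F (2*M+1) =
  sum_f_R0 (fun i => F (2*i)%nat) M + sum_f_R0 (fun i => F (2*i+1)%nat) M.
Proof.
  intros F M. induction M.
  - simpl. ring.
  - replace (2 * S M + 1)%nat with (S (S (2*M+1))) by lia.
    change (sum_f_R0 F (S (S (2*M+1)))) with (sum_f_R0 F (2*M+1) + F (S (2*M+1)) + F (S (S (2*M+1)))).
    rewrite IHM. change (sum_f_R0 (fun i => F (2*i)%nat) (S M)) with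
      (sum_f_R0 (fun i => F (2*i)%nat) M + F (2 * S M)%nat).
    change (sum_f_R0 (fun i => F (2*i+1)%nat) (S M)) with
      (sum_f_R0 (fun i => F (2*i+1)%nat) M + F (2 * S M + 1)%nat).
    replace (2 * S M)%nat with (S (2*M+1)) by lia.
    replace (S (2*M+1) + 1)%nat with (S (S (2*M+1))) by lia. ring.
Qed.

Lemma sum_zero : forall F M, (forall i, (i <= M)%nat -> F i = 0) -> sum_f_R0 F M = 0.
Proof.
  intros F M. induction M; intros H.
  - simpl. apply H. lia.
  - simpl. rewrite IHM by (intros; apply H; lia). rewrite H by lia. ring.
Qed.

Lemma m1pow : forall j, (-1)^j = 1 \/ (-1)^j = -1.
Proof. induction j; simpl; [left; ring|destruct IHj as [H|H]; rewrite H; [right|left]; ring]. Qed.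

Lemma m1pow_nz : forall j, (-1)^j <> 0.
Proof. intros j. destruct (m1pow j) as [H|H]; rewrite H; lra. Qed.

Lemma term_even (s Z sg : R) (HZ : Z^2 = 4*PI^2*s/3) (Hsg : sg^2 = s) (i j : nat) :
  (-4 * PI ^ 2 * s / 3) ^ (S i) / (INR (fact (2 * S i - 1)) * INR (fact (S i + S (i+j))) * INR (fact (S (i+j) - S i))) * (s ^ S (i+j) * INR (fact (2 * S (i+j) - 1)) / (-4) ^ S (i+j))
 = Z ^ (2 * S i) / INR (fact (2 * S i)) * Y (2 * S (i+j)) (2 * S i) * sg ^ (2 * S (i+j)).
Proof.
  replace (Y (2 * S (i + j)) (2 * S i)) with (G (2*i+1) j)
    by (rewrite <- Y_closed; f_equal; lia).
  unfold G.
  replace (2 * S i - 1)%nat with (2*i+1)%nat by lia.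
  replace (S i + S (i + j))%nat with (S (2*i+1) + j)%nat by lia.
  replace (S (i + j) - S i)%nat with j by lia.
  replace (2 * S (i + j) - 1)%nat with (2*i+1 + 2*j)%nat by lia.
  replace (2 * S i)%nat with (S (2*i+1)) at 2 by lia.
  rewrite fact_simpl, mult_INR.
  rewrite pow_mult, HZ, pow_mult, Hsg.
  replace (-4 * PI ^ 2 * s / 3) with (-1 * (4 * PI ^ 2 * s / 3)) by field.
  replace (-4) with (-1 * 2^2) by field.
  rewrite !Rpow_mult_distr, <- pow_mult.
  replace (2 * S (i+j))%nat with (S (2 * i + 1) + 2 * j)%nat by lia.
  assert (Hm : (-1)^(S (i+j)) = (-1)^(S i) * (-1)^j) by (rewrite <- pow_add; f_equal; lia).
  rewrite Hm.
  pose proof (INR_fact_neq_0 (2*i+1)).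
  pose proof (INR_fact_neq_0 (S (2*i+1)+j)).
  pose proof (INR_fact_neq_0 j).
  pose proof (INR_fact_neq_0 (2*i+1+2*j)).
  pose proof (pow_lt 2 (S (2 * i + 1) + 2 * j) ltac:(lra)).
  pose proof (m1pow_nz (S i)).
  destruct (m1pow j) as [Hj|Hj]; rewrite Hj.
  all: rewrite !S_INR, !plus_INR, !mult_INR; simpl (INR 2); simpl (INR 1).
  all: pose proof (pos_INR i).
  all: generalize dependent (INR (fact (2*i+1))); generalize dependent (INR (fact (S (2*i+1)+j)));
       generalize dependent (INR (fact j)); generalize dependent (INR (fact (2*i+1+2*j)));
       generalize dependent (2 ^ (S (2 * i + 1) + 2 * j)); generalize dependent ((-1)^(S i));
       generalize ((4 * PI ^ 2 * s / 3) ^ S i); generalize (s ^ S (i+j)); generalize dependent (INR i).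
  all: intros; field; repeat split; try lra.
Qed.

Lemma term_odd (s Z sg : R) (HZ : Z^2 = 4*PI^2*s/3) (HZ1 : Z = 2*PI*s/(sg*sqrt 3)) (Hsg : sg^2 = s)
  (Hsg0 : 0 < sg) (i j : nat) :
  (-4 * PI ^ 2 * s / 3) ^ i / (INR (fact (2 * i)) * INR (fact (i + j - i)) * INR (fact (i + (i+j) + 1))) *
  (PI * s ^ (i + j + 1) * INR (fact (2 * (i+j))) / (sqrt 3 * (-4) ^ (i+j)))
 = Z ^ (2 * i + 1) / INR (fact (2 * i + 1)) * Y (2 * (i+j) + 1) (2 * i + 1) * sg ^ (2 * (i+j) + 1).
Proof.
  replace (Y (2 * (i + j) + 1) (2 * i + 1)) with (G (2*i) j)
    by (rewrite <- Y_closed; f_equal; lia).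
  unfold G.
  replace (i + j - i)%nat with j by lia.
  replace (i + (i + j) + 1)%nat with (S (2*i) + j)%nat by lia.
  replace (2 * (i + j))%nat with (2*i + 2*j)%nat by lia.
  replace (2 * i + 1)%nat with (S (2*i)) by lia.
  rewrite fact_simpl, mult_INR.
  replace (S (2 * i)) with (2 * i + 1)%nat at 2 by lia.
  assert (E1 : Z ^ (2 * i + 1) = (Z^2)^i * Z) by (rewrite pow_add, pow_mult; ring).
  assert (E2 : sg ^ (2 * i + 2 * j + 1) = (sg^2)^(i+j) * sg)
    by (replace (2*i+2*j+1)%nat with (2*(i+j)+1)%nat by lia; rewrite pow_add, pow_mult; ring).
  assert (E3 : s ^ (i + j + 1) = s^(i+j) * s) by (rewrite pow_add; ring).
  rewrite E1, E2, E3, HZ, Hsg.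
  replace (-4 * PI ^ 2 * s / 3) with (-1 * (4 * PI ^ 2 * s / 3)) by field.
  replace (-4) with (-1 * 2^2) by field.
  rewrite !Rpow_mult_distr, <- pow_mult.
  assert (Hm : (-1)^(i+j) = (-1)^i * (-1)^j) by (rewrite <- pow_add; f_equal).
  rewrite Hm.
  replace (2 * (i + j))%nat with (2 * i + 2 * j)%nat by lia.
  replace (2 ^ (2 * i + 2 * j)) with (2 ^ (S (2 * i) + 2 * j) / 2)
    by (replace (S (2 * i) + 2 * j)%nat with (S (2 * i + 2 * j)) by lia; simpl; field).
  rewrite HZ1.
  assert (H3 : 0 < sqrt 3) by (apply sqrt_lt_R0; lra).
  pose proof PI_RGT_0.
  pose proof (INR_fact_neq_0 (2*i)).
  pose proof (INR_fact_neq_0 (S (2*i)+j)).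
  pose proof (INR_fact_neq_0 j).
  pose proof (INR_fact_neq_0 (2*i+2*j)).
  pose proof (pow_lt 2 (S (2 * i) + 2 * j) ltac:(lra)).
  pose proof (m1pow_nz i).
  destruct (m1pow j) as [Hj|Hj]; rewrite Hj.
  all: rewrite ?S_INR, ?plus_INR, ?mult_INR; simpl (INR 2); simpl (INR 1).
  all: pose proof (pos_INR i).
  all: generalize dependent (INR (fact (2*i))); generalize dependent (INR (fact (S (2*i)+j)));
       generalize dependent (INR (fact j)); generalize dependent (INR (fact (2*i+2*j)));
       generalize dependent (2 ^ (S (2 * i) + 2 * j)); generalize dependent ((-1)^i);
       generalize ((4 * PI ^ 2 * s / 3) ^ i); generalize (s ^ (i+j)); generalize dependent (INR i).
  all: intros; field; repeat split; try lra.
Qed.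

Lemma dlink (s Z sg : R) (HZ : Z^2 = 4*PI^2*s/3) (HZ1 : Z = 2*PI*s/(sg*sqrt 3)) (Hsg : sg^2 = s)
  (Hsg0 : 0 < sg) : forall K m, (m <= K)%nat ->
  d_one s m = sum_f_R0 (fun k => Z ^ k / INR (fact k) * Y m k * sg ^ m) K.
Proof.
  intros K m Hm.
  rewrite (sum_zero_tail _ m K) by (try intros k Hk; try rewrite Y_lt by lia; try ring; lia).
  destruct (Nat.Even_or_Odd m) as [[M HM]|[M HM]]; subst m.
  - rewrite <- (sum_zero_tail _ (2*M) (2*M+1)) by (try intros k Hk; try rewrite Y_lt by lia; try ring; lia).
    rewrite sum_even_odd. cbv beta.
    rewrite (sum_zero (fun i => Z ^ (2*i+1) / INR (fact (2*i+1)) * Y (2*M) (2*i+1) * sg ^ (2*M))).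
    2:{ intros i Hi. rewrite Y_parity. ring.
        replace (2*M + (2*i+1))%nat with (2*(M+i)+1)%nat by lia. apply Nat.even_odd. }
    rewrite Rplus_0_r. unfold d_one. rewrite Nat.even_even, Nat.div2_double.
    destruct M as [|M'].
    + simpl. field.
    + rewrite decomp_sum by lia. simpl pred.
      replace (Y (2 * S M') (2 * 0)) with 0
        by (replace (2 * S M')%nat with (S (2*M'+1)) by lia; reflexivity).
      assert (He : e_one s (S M') = (s ^ S M' * INR (fact (2 * S M' - 1)) / (-4) ^ S M') *
         sum_f_R0 (fun k => (-4 * PI ^ 2 * s / 3) ^ S k / (INR (fact (2 * S k - 1)) *
            INR (fact (S k + S M')) * INR (fact (S M' - S k)))) (S M' - 1)) by reflexivity.
      rewrite He. replace (S M' - 1)%nat with M' by lia. rewrite scal_sum.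
      replace (Z ^ (2 * 0) / INR (fact (2 * 0)) * 0 * sg ^ (2 * S M')) with 0 by ring.
      rewrite Rplus_0_l. apply sum_eq. intros i Hi.
      destruct (Nat.le_exists_sub i M' Hi) as [j [-> _]].
      replace (j + i)%nat with (i + j)%nat by lia.
      apply term_even; assumption.
  - rewrite sum_even_odd. cbv beta.
    rewrite (sum_zero (fun i => Z ^ (2*i) / INR (fact (2*i)) * Y (2*M+1) (2*i) * sg ^ (2*M+1))).
    2:{ intros i Hi. rewrite Y_parity. ring.
        replace (2*M + 1 + 2*i)%nat with (2*(M+i)+1)%nat by lia. apply Nat.even_odd. }
    rewrite Rplus_0_l. unfold d_one. rewrite Nat.even_odd, Nat.div2_odd'.
    unfold o_one. rewrite scal_sum. apply sum_eq. intros i Hi.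
    destruct (Nat.le_exists_sub i M Hi) as [j [-> _]].
    replace (j + i)%nat with (i + j)%nat by lia.
    apply term_odd; assumption.
Qed.

Lemma Series_zero : Series (fun _ => 0) = 0.
Proof.
  rewrite (Series_ext _ (fun n => 0 * 0)) by (intros; ring).
  rewrite Series_scal_l. ring.
Qed.

Lemma Series_nonneg : forall a, (forall n, 0 <= a n) -> ex_series a -> 0 <= Series a.
Proof.
  intros a H Ha. rewrite <- Series_zero. apply Series_le; auto. intros; split; [lra|auto].
Qed.

Lemma exp_series : forall x, is_series (fun k => x ^ k / INR (fact k)) (exp x).
Proof.
  intros x. eapply is_series_ext; [|apply is_exp_Reals].
  intros n. simpl. rewrite pow_n_pow. unfold scal; simpl. unfold mult; simpl. unfold Rdiv. ring.
Qed.

Lemma exp_ex : forall x, ex_series (fun k => x ^ k / INR (fact k)).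
Proof. intros x. eexists. apply exp_series. Qed.

Lemma exp_split : forall x K, exp x = sum_f_R0 (fun k => x ^ k / INR (fact k)) K +
   Series (fun k => x ^ (S K + k) / INR (fact (S K + k))).
Proof.
  intros x K. rewrite <- (is_series_unique _ _ (exp_series x)).
  rewrite (Series_incr_n _ (S K)) by (lia || apply exp_ex). reflexivity.
Qed.

Lemma exp_term_nonneg : forall z k, 0 <= z -> 0 <= z ^ k / INR (fact k).
Proof.
  intros. apply Rmult_le_pos. apply pow_le; auto. apply Rlt_le, Rinv_0_lt_compat, INR_fact_lt_0.
Qed.

Lemma exp_partial_le : forall z K, 0 <= z -> sum_f_R0 (fun k => z ^ k / INR (fact k)) K <= exp z.
Proof.
  intros z K Hz. rewrite (exp_split z K).
  assert (0 <= Series (fun k => z ^ (S K + k) / INR (fact (S K + k)))).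
  { apply Series_nonneg. intros; apply exp_term_nonneg; auto.
    apply (ex_series_incr_n (fun k => z ^ k / INR (fact k))). apply exp_ex. }
  lra.
Qed.

Lemma pow_le_one : forall r k, 0 <= r <= 1 -> r ^ k <= 1.
Proof.
  intros r k Hr. induction k; simpl. lra.
  pose proof (pow_le r k (proj1 Hr)). nra.
Qed.

Lemma exp_tail : forall z r K, 0 <= z -> 0 <= r <= 1 ->
  Rabs (exp (r * z) - sum_f_R0 (fun k => (r * z) ^ k / INR (fact k)) K) <= r ^ (S K) * exp z.
Proof.
  intros z r K Hz Hr.
  rewrite (exp_split (r*z) K). 
  replace (sum_f_R0 (fun k => (r * z) ^ k / INR (fact k)) K +
    Series (fun k => (r * z) ^ (S K + k) / INR (fact (S K + k))) -
    sum_f_R0 (fun k => (r * z) ^ k / INR (fact k)) K) with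
    (Series (fun k => (r * z) ^ (S K + k) / INR (fact (S K + k)))) by ring.
  assert (Hrz : 0 <= r * z) by nra.
  assert (Ht : ex_series (fun k => z ^ (S K + k) / INR (fact (S K + k)))).
  { apply (ex_series_incr_n (fun k => z ^ k / INR (fact k))). apply exp_ex. }
  rewrite Rabs_right.
  2:{ apply Rle_ge, Series_nonneg. intros; apply exp_term_nonneg; auto.
      apply (ex_series_incr_n (fun k => (r*z) ^ k / INR (fact k))). apply exp_ex. }
  apply Rle_trans with (Series (fun k => r ^ (S K) * (z ^ (S K + k) / INR (fact (S K + k))))).
  - apply Series_le.
    + intros k. split. apply exp_term_nonneg; auto.
      rewrite Rpow_mult_distr.
      assert (0 <= r ^ k <= 1) by (split; [apply pow_le; lra| apply pow_le_one; lra]).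
      pose proof (exp_term_nonneg z (S K + k) Hz).
      pose proof (pow_le r (S K) (proj1 Hr)).
      replace (r ^ (S K + k) * z ^ (S K + k) / INR (fact (S K + k))) with
        ((r ^ S K * (z ^ (S K + k) / INR (fact (S K + k)))) * r ^ k)
        by (rewrite !pow_add; unfold Rdiv; ring).
      apply Rle_trans with ((r ^ S K * (z ^ (S K + k) / INR (fact (S K + k)))) * 1).
      apply Rmult_le_compat_l. apply Rmult_le_pos; auto. lra. lra.
    + apply (ex_series_scal_l (r ^ S K)) in Ht. exact Ht.
  - rewrite Series_scal_l. apply Rmult_le_compat_l. apply pow_le; lra.
    pose proof (exp_split z K).
    assert (0 <= sum_f_R0 (fun k => z ^ k / INR (fact k)) K)
      by (apply cond_pos_sum; intros; apply exp_term_nonneg; auto).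
    lra.
Qed.

Definition Ut (q : R) (k : nat) := Series (fun m => Y m k * q ^ m).

Lemma Yq_abs : forall q m k, 0 <= q -> Rabs (Y m k * q ^ m) <= q ^ m.
Proof.
  intros q m k Hq. rewrite Rabs_mult, (Rabs_right (q^m)) by (apply Rle_ge, pow_le; auto).
  pose proof (Y_bound1 m k). pose proof (pow_le q m Hq). nra.
Qed.

Lemma U_ex : forall q k, 0 <= q < 1 -> ex_series (fun m => Y m k * q ^ m).
Proof.
  intros q k Hq. apply (@ex_series_le R_AbsRing R_CompleteNormedModule) with (b := fun m => q ^ m).
  - intros m. change (norm (Y m k * q ^ m)) with (Rabs (Y m k * q ^ m)). apply Yq_abs; lra.
  - apply ex_series_geom. rewrite Rabs_right; lra.
Qed.

Lemma U_abs_ex : forall q k, 0 <= q < 1 -> ex_series (fun m => Rabs (Y m k * q ^ m)).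
Proof.
  intros q k Hq. apply (@ex_series_le R_AbsRing R_CompleteNormedModule) with (b := fun m => q ^ m).
  - intros m. change (norm (Rabs (Y m k * q ^ m))) with (Rabs (Rabs (Y m k * q ^ m))).
    rewrite Rabs_Rabsolu. apply Yq_abs; lra.
  - apply ex_series_geom. rewrite Rabs_right; lra.
Qed.

Lemma U0 : forall q, 0 <= q < 1 -> Ut q 0 = 1.
Proof.
  intros q Hq. unfold Ut. rewrite Series_incr_1 by (apply U_ex; auto).
  rewrite (Series_ext _ (fun _ => 0)) by (intros; simpl; ring).
  rewrite Series_zero. simpl. ring.
Qed.

Lemma U_S : forall q k, 0 <= q < 1 -> Ut q (S k) = q / 2 * (Ut q k - Ut q (S (S k))).
Proof.
  intros q k Hq. unfold Ut. rewrite (Series_incr_1 (fun m => Y m (S k) * q ^ m)) by (apply U_ex; auto).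
  rewrite (Series_ext _ (fun m => q / 2 * (Y m k * q ^ m - Y m (S (S k)) * q ^ m)))
    by (intros; simpl; field).
  rewrite Series_scal_l, Series_minus by (apply U_ex; auto). simpl. ring.
Qed.

Lemma Urec : forall q k, 0 < q < 1 -> Ut q (S (S k)) = Ut q k - 2 / q * Ut q (S k).
Proof.
  intros q k Hq. rewrite (U_S q k) by lra. field. lra.
Qed.

Lemma geom_val : forall q, 0 <= q < 1 -> Series (fun m => q ^ m) = / (1 - q).
Proof.
  intros q Hq. apply is_series_unique, is_series_geom. rewrite Rabs_right; lra.
Qed.

Lemma U_abs : forall q k, 0 <= q <= /2 -> Rabs (Ut q k) <= 2.
Proof.
  intros q k Hq. unfold Ut.
  eapply Rle_trans. apply Series_Rabs, U_abs_ex; lra.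
  eapply Rle_trans. apply Series_le with (b := fun m => q ^ m).
  - intros m. split. apply Rabs_pos. apply Yq_abs; lra.
  - apply ex_series_geom. rewrite Rabs_right; lra.
  - rewrite geom_val by lra.
    apply Rle_trans with (/ (/2)). apply Rinv_le_contravar; lra. lra.
Qed.

Lemma U_tail : forall q k K, 0 <= q <= /2 -> (1 <= K)%nat ->
  Rabs (Ut q k - sum_f_R0 (fun m => Y m k * q ^ m) K) <= q ^ (S K) / 2.
Proof.
  intros q k K Hq HK. unfold Ut.
  rewrite (Series_incr_n _ (S K)) by (lia || (apply U_ex; lra)). simpl pred.
  replace (sum_f_R0 (fun m => Y m k * q ^ m) K + Series (fun k0 => Y (S K + k0) k * q ^ (S K + k0)) -
     sum_f_R0 (fun m => Y m k * q ^ m) K) with (Series (fun k0 => Y (S K + k0) k * q ^ (S K + k0))) by ring.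
  eapply Rle_trans. apply Series_Rabs.
  { apply (ex_series_incr_n (fun m => Rabs (Y m k * q ^ m))). apply U_abs_ex; lra. }
  eapply Rle_trans. apply Series_le with (b := fun j => (/4 * q ^ (S K)) * q ^ j).
  - intros j. split. apply Rabs_pos.
    rewrite Rabs_mult, (Rabs_right (q^_)) by (apply Rle_ge, pow_le; lra).
    rewrite pow_add. pose proof (Y_bound2 (S K + j) k ltac:(lia)).
    pose proof (pow_le q (S K) ltac:(lra)). pose proof (pow_le q j ltac:(lra)).
    assert (0 <= q ^ S K * q ^ j) by (apply Rmult_le_pos; auto). nra.
  - apply (ex_series_scal_l (/4 * q ^ S K) (fun j => q ^ j)). apply ex_series_geom.
    rewrite Rabs_right; lra.
  - rewrite Series_scal_l, geom_val by lra.
    pose proof (pow_le q (S K) ltac:(lra)).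
    assert (/ (1 - q) <= 2) by (apply Rle_trans with (/ (/2)); [apply Rinv_le_contravar; lra| lra]).
    assert (0 <= / (1-q)) by (apply Rlt_le, Rinv_0_lt_compat; lra).
    nra.
Qed.

Lemma U_eq : forall q u, 0 < q <= /2 -> 0 < u < 1 -> u ^ 2 + 2 / q * u = 1 ->
  forall k, Ut q k = u ^ k.
Proof.
  intros q u Hq Hu Heq.
  set (D := fun k => Ut q k - u ^ k).
  assert (D0 : D 0%nat = 0) by (unfold D; rewrite U0 by lra; simpl; ring).
  assert (Drec : forall k, D (S (S k)) = D k - 2 / q * D (S k)).
  { intros k. unfold D. rewrite Urec by lra.
    assert (u ^ S (S k) = u ^ k - 2 / q * u ^ (S k)).
    { replace (u ^ S (S k)) with (u ^ k * u ^ 2) by (simpl; ring).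
      replace (u ^ 2) with (1 - 2 / q * u) by lra. simpl. ring. }
    rewrite H. ring. }
  assert (Dabs : forall k, Rabs (D k) <= 3).
  { intros k. unfold D. pose proof (U_abs q k ltac:(lra)).
    assert (0 <= u ^ k <= 1) by (split; [apply pow_le; lra|apply pow_le_one; lra]).
    pose proof (Rabs_triang (Ut q k) (- u ^ k)). rewrite Rabs_Ropp in H1.
    rewrite (Rabs_right (u^k)) in H1 by lra. unfold Rminus. lra. }
  set (E := fun k => D (S k) - u * D k).
  assert (Estep : forall k, E k = - u * E (S k)).
  { intros k. unfold E. rewrite Drec.
    assert (u * (2 / q) = 1 - u ^ 2) by (rewrite <- Heq; field; lra).
    replace (- u * (D k - 2 / q * D (S k) - u * D (S k))) with
      (- u * D k + (u * (2/q)) * D (S k) + u ^ 2 * D (S k)) by ring.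
    rewrite H. ring. }
  assert (Epow : forall k, E 0%nat = (- u) ^ k * E k).
  { induction k. simpl; ring. rewrite IHk, Estep. simpl. ring. }
  assert (Eabs : forall k, Rabs (E k) <= 6).
  { intros k. unfold E. pose proof (Dabs (S k)). pose proof (Dabs k).
    pose proof (Rabs_triang (D (S k)) (- (u * D k))). rewrite Rabs_Ropp, Rabs_mult in H1.
    rewrite (Rabs_right u) in H1 by lra. unfold Rminus. nra. }
  assert (E00 : E 0%nat = 0).
  { destruct (Req_dec (E 0%nat) 0) as [H|H]; auto. exfalso.
    assert (Hp : 0 < Rabs (E 0%nat) / 6) by (apply Rdiv_lt_0_compat; [apply Rabs_pos_lt; auto|lra]).
    destruct (pow_lt_1_zero u ltac:(rewrite Rabs_right; lra) _ Hp) as [N HN].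
    specialize (HN N (le_n N)).
    pose proof (Epow N). pose proof (Eabs N).
    assert (Rabs (E 0%nat) = Rabs (u ^ N) * Rabs (E N)).
    { rewrite H0, Rabs_mult, <- !RPow_abs. f_equal. rewrite Rabs_Ropp. reflexivity. }
    pose proof (Rabs_pos (u ^ N)). nra. }
  assert (D1 : D 1%nat = 0).
  { unfold E in E00. rewrite D0 in E00. lra. }
  assert (Dz : forall k, D k = 0 /\ D (S k) = 0).
  { induction k. auto. destruct IHk as [H1 H2]. split; auto. rewrite Drec, H1, H2. ring. }
  intros k. destruct (Dz k) as [H _]. unfold D in H. lra.
Qed.

Lemma sum_swap : forall (F : nat -> nat -> R) K L,
  sum_f_R0 (fun m => sum_f_R0 (fun k => F m k) L) K = sum_f_R0 (fun k => sum_f_R0 (fun m => F m k) K) L.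
Proof.
  intros F K L. induction K.
  - simpl. reflexivity.
  - simpl. rewrite IHK. rewrite <- plus_sum. reflexivity.
Qed.

Lemma sum_div : forall f K a, sum_f_R0 f K / a = sum_f_R0 (fun k => f k / a) K.
Proof. intros. unfold Rdiv. rewrite Rmult_comm, scal_sum. apply sum_eq. intros; ring. Qed.

Lemma sum_mul_l : forall f K a, a * sum_f_R0 f K = sum_f_R0 (fun k => a * f k) K.
Proof. intros. rewrite scal_sum. apply sum_eq. intros; ring. Qed.

Lemma Rpower_half : forall x m, 0 < x -> Rpower x (INR m / 2) = sqrt x ^ m.
Proof.
  intros x m Hx. replace (INR m / 2) with (/ 2 * INR m) by field.
  rewrite <- Rpower_mult, Rpower_sqrt by auto. apply Rpower_pow. apply sqrt_lt_R0; auto.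
Qed.

Theorem lemma5p1 (N s n : nat) (hN : (3 <= N)%nat) (hs : (1 <= s)%nat)
  (hn : (4 * s ^ 2 <= n)%nat) :
  exists E : R,
    Rabs E <= 1.5 * Rpower (INR s) ((INR N + 3) / 2)
               * cosh (2 * PI * sqrt (INR s / 3))
               * Rpower (INR n) (- ((INR N + 2) / 2)) /\
    exp (2 * PI * sqrt ((INR n + INR s) / 3)) =
    exp (2 * PI * sqrt (INR n / 3)) *
      (sum_f_R0 (fun m => d_one (INR s) m / Rpower (INR n) (INR m / 2)) (N + 1)%nat + E).
Proof.
  set (sR := INR s). set (nR := INR n).
  assert (HsR : 1 <= sR) by (unfold sR; apply (le_INR 1 s) in hs; simpl in hs; lra).
  assert (HnR : 4 * sR ^ 2 <= nR).
  { unfold sR, nR. apply le_INR in hn. rewrite mult_INR, pow_INR in hn. simpl in hn. lra. }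
  assert (HnR0 : 0 < nR) by nra.
  set (sg := sqrt sR). set (nu := sqrt nR). set (w := sqrt (nR + sR)).
  assert (Hsg2 : sg ^ 2 = sR) by (apply pow2_sqrt; lra).
  assert (Hnu2 : nu ^ 2 = nR) by (apply pow2_sqrt; lra).
  assert (Hw2 : w ^ 2 = nR + sR) by (apply pow2_sqrt; lra).
  assert (Hsg1 : 1 <= sg) by (unfold sg; rewrite <- sqrt_1; apply sqrt_le_1_alt; lra).
  assert (Hnu0 : 0 < nu) by (apply sqrt_lt_R0; lra).
  assert (Hwnu : nu < w) by (apply sqrt_lt_1_alt; lra).
  assert (H3 : 0 < sqrt 3) by (apply sqrt_lt_R0; lra).
  set (q := sg / nu). set (u := (w - nu) / sg).
  set (Z := 2 * PI * sqrt (sR / 3)).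
  assert (Hq0 : 0 < q) by (unfold q; apply Rdiv_lt_0_compat; lra).
  assert (Hq2 : q ^ 2 * nR = sR) by (unfold q; rewrite <- Hsg2, <- Hnu2; field; lra).
  assert (Hq : q <= / 2).
  { assert (q ^ 2 <= /4).
    { apply Rmult_le_reg_r with nR; auto. rewrite Hq2. nra. }
    nra. }
  assert (Hu1 : u * (w + nu) = sg).
  { unfold u. apply Rmult_eq_reg_r with sg; [|lra].
    field_simplify; [|lra]. replace (w ^ 2 - nu ^ 2) with sR by lra. rewrite <- Hsg2. ring. }
  assert (Hu0 : 0 < u) by (unfold u; apply Rdiv_lt_0_compat; lra).
  assert (Huq : u <= q / 2).
  { unfold q. apply Rmult_le_reg_r with (2 * nu); [lra|].
    replace (sg / nu / 2 * (2 * nu)) with sg by (field; lra). nra. }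
  assert (Hu_lt1 : u < 1) by lra.
  assert (Hueq : u ^ 2 + 2 / q * u = 1).
  { assert (Hq' : 2 / q = 2 * nu / sg) by (unfold q; field; split; lra).
    rewrite Hq'. unfold u.
    replace ((w - nu) / sg) with ((w - nu) / sg) by reflexivity.
    replace (((w - nu) / sg) ^ 2 + 2 * nu / sg * ((w - nu) / sg)) with
      (((w - nu) ^ 2 + 2 * nu * (w - nu)) / sg ^ 2) by (field; lra).
    replace ((w - nu) ^ 2 + 2 * nu * (w - nu)) with (w ^ 2 - nu ^ 2) by ring.
    rewrite Hw2, Hnu2, Hsg2. field. lra. }
  assert (HZsqrt : sqrt (sR / 3) = sg / sqrt 3) by (apply sqrt_div_alt; lra).
  assert (HZ2 : Z ^ 2 = 4 * PI ^ 2 * sR / 3).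
  { unfold Z. rewrite HZsqrt. replace (sqrt 3) with (sqrt 3) by reflexivity.
    assert (sqrt 3 ^ 2 = 3) by (apply pow2_sqrt; lra).
    field_simplify; [|lra]. rewrite H, Hsg2. field. }
  assert (HZ1 : Z = 2 * PI * sR / (sg * sqrt 3)).
  { unfold Z. rewrite HZsqrt. rewrite <- Hsg2. field. split; lra. }
  assert (HZ0 : 0 <= Z).
  { rewrite HZ1. pose proof PI_RGT_0. apply Rlt_le, Rdiv_lt_0_compat; nra. }
  assert (HZu : 2 * PI * sqrt ((nR + sR) / 3) = 2 * PI * sqrt (nR / 3) + u * Z).
  { rewrite !sqrt_div_alt by lra. fold w nu. unfold Z. rewrite HZsqrt. unfold u. field. split; lra. }
  set (K := (N + 1)%nat).
  set (c := fun k => Z ^ k / INR (fact k)).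
  set (P := sum_f_R0 (fun m => d_one sR m / Rpower nR (INR m / 2)) K).
  exists (exp (u * Z) - P).
  split.
  2:{ rewrite HZu, exp_plus. ring. }
  assert (HP : P = sum_f_R0 (fun k => c k * sum_f_R0 (fun m => Y m k * q ^ m) K) K).
  { unfold P. rewrite (sum_eq _ (fun m => sum_f_R0 (fun k => c k * (Y m k * q ^ m)) K)).
    - rewrite sum_swap. apply sum_eq. intros k Hk. rewrite sum_mul_l. reflexivity.
    - intros m Hm. rewrite Rpower_half by lra. fold nu.
      rewrite (dlink sR Z sg HZ2 HZ1 Hsg2 ltac:(lra) K m Hm).
      rewrite sum_div. apply sum_eq. intros k Hk. unfold c, q.
      unfold Rdiv. rewrite Rpow_mult_distr, pow_inv. ring. }
  assert (HUk : forall k, Ut q k = u ^ k) by (apply U_eq; lra).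
  assert (Hsum1 : sum_f_R0 (fun k => (u * Z) ^ k / INR (fact k)) K = sum_f_R0 (fun k => c k * Ut q k) K).
  { apply sum_eq; intros k Hk. unfold c. rewrite HUk, Rpow_mult_distr. unfold Rdiv. ring. }
  assert (Hsum2 : sum_f_R0 (fun k => c k * (Ut q k - sum_f_R0 (fun m => Y m k * q ^ m) K)) K =
     sum_f_R0 (fun k => c k * Ut q k) K - sum_f_R0 (fun k => c k * sum_f_R0 (fun m => Y m k * q ^ m) K) K).
  { rewrite <- minus_sum. apply sum_eq; intros; ring. }
  assert (HE : exp (u * Z) - P =
     (exp (u * Z) - sum_f_R0 (fun k => (u * Z) ^ k / INR (fact k)) K) +
     sum_f_R0 (fun k => c k * (Ut q k - sum_f_R0 (fun m => Y m k * q ^ m) K)) K).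
  { rewrite Hsum2, Hsum1, HP. ring. }
  assert (Hc0 : forall k, 0 <= c k) by (intros; unfold c; apply exp_term_nonneg; auto).
  assert (B1 : Rabs (exp (u * Z) - sum_f_R0 (fun k => (u * Z) ^ k / INR (fact k)) K) <= u ^ (S K) * exp Z)
    by (apply exp_tail; lra).
  assert (B2 : Rabs (sum_f_R0 (fun k => c k * (Ut q k - sum_f_R0 (fun m => Y m k * q ^ m) K)) K)
     <= sum_f_R0 (fun k => c k * (q ^ (S K) / 2)) K).
  { eapply Rle_trans; [apply Rsum_abs|]. apply sum_Rle. intros k Hk.
    rewrite Rabs_mult, (Rabs_right (c k)) by (apply Rle_ge; auto).
    apply Rmult_le_compat_l; auto. apply U_tail; [lra|unfold K; lia]. }
  assert (B3 : sum_f_R0 (fun k => c k * (q ^ (S K) / 2)) K = sum_f_R0 c K * (q ^ (S K) / 2))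
    by (rewrite <- scal_sum; ring).
  assert (B4 : sum_f_R0 c K <= exp Z) by (apply exp_partial_le; auto).
  assert (B5 : u ^ (S K) <= (q / 2) ^ (S K)) by (apply pow_incr; lra).
  assert (B6 : (q / 2) ^ (S K) = q ^ (S K) / 2 ^ (S K)) by (unfold Rdiv; rewrite Rpow_mult_distr, pow_inv; ring).
  assert (B7 : 16 <= 2 ^ (S K)).
  { replace (S K) with (4 + (S K - 4))%nat by (unfold K; lia). rewrite pow_add.
    pose proof (pow_R1_Rle 2 (S K - 4) ltac:(lra)). replace (2 ^ 4) with 16 by (simpl; ring). lra. }
  assert (Hcosh : exp Z / 2 <= cosh Z) by (unfold cosh; pose proof (exp_pos (- Z)); lra).
  assert (HR1 : Rpower sR ((INR N + 3) / 2) = sg ^ (N + 3)).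
  { replace (INR N + 3) with (INR (N + 3)) by (rewrite plus_INR; simpl; ring). apply Rpower_half; lra. }
  assert (HR2 : Rpower nR (- ((INR N + 2) / 2)) = / nu ^ (N + 2)).
  { rewrite Rpower_Ropp. replace (INR N + 2) with (INR (N + 2)) by (rewrite plus_INR; simpl; ring).
    rewrite Rpower_half by lra. reflexivity. }
  rewrite HR1, HR2, HE.
  assert (Hsgq : sg ^ (N + 3) * / nu ^ (N + 2) = sg * q ^ (S K)).
  { unfold q, K. replace (S (N + 1)) with (N + 2)%nat by lia.
    replace (N + 3)%nat with (S (N + 2)) by lia. unfold Rdiv. rewrite Rpow_mult_distr, pow_inv. simpl. ring. }
  assert (HqK : 0 <= q ^ S K) by (apply pow_le; lra).
  assert (HeZ : 0 < exp Z) by apply exp_pos.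
  assert (Hu2 : u ^ S K * exp Z <= q ^ S K / 16 * exp Z).
  { apply Rmult_le_compat_r; [lra|]. rewrite B6 in B5. eapply Rle_trans; [exact B5|].
    unfold Rdiv. apply Rmult_le_compat_l; auto. apply Rinv_le_contravar; lra. }
  eapply Rle_trans; [apply Rabs_triang|].
  replace (1.5 * sg ^ (N + 3) * cosh Z * / nu ^ (N + 2)) with (1.5 * cosh Z * (sg * q ^ (S K)))
    by (rewrite <- Hsgq; ring).
  assert (0 <= sum_f_R0 c K) by (apply cond_pos_sum; auto).
  assert (S1 : sum_f_R0 c K * (q ^ S K / 2) <= exp Z * (q ^ S K / 2))
    by (apply Rmult_le_compat_r; lra).
  assert (S2 : exp Z / 2 * q ^ S K <= cosh Z * (sg * q ^ S K)).
  { apply Rmult_le_compat; try lra. nra. }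
  assert (S3 : q ^ S K / 16 * exp Z + exp Z * (q ^ S K / 2) <= 1.5 * (exp Z / 2 * q ^ S K)).
  { assert (0 <= q ^ S K * exp Z) by nra. nra. }
  lra.
Qed.
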